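(* Let $G$ be an abelian group. Then every characteristic subgroup of $G\oplus G$ is fully invariant in $G\oplus G$.
   Context: A subgroup of an abelian group $K$ is characteristic if it is mapped into itself by every automorphism of $K$, and fully invariant if it is mapped into itself by every endomorphism of $K$. *)

(* Defs.v *)
From HB Require Import structures.
From mathcomp Require Import all_boot all_algebra.
Set Implicit Arguments. Unset Strict Implicit. Unset Printing Implicit Defensive.
Import GRing.Theory.
Local Open Scope ring_scope.

Definition is_subgroup (K : zmodType) (S : K -> Prop) : Prop :=
  S 0 /\ (forall x y, S x -> S y -> S (x - y)).

Definition is_endomorphism (K : zmodType) (f : K -> K) : Prop :=
  forall x y, f (x + y) = f x + f y.

Definition is_automorphism (K : zmodType) (f : K -> K) : Prop :=
  is_endomorphism f /\ bijective f.

Definition characteristic (K : zmodType) (S : K -> Prop) : Prop :=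
  is_subgroup S /\ forall f, is_automorphism f -> forall x, S x -> S (f x).

Definition fully_invariant (K : zmodType) (S : K -> Prop) : Prop :=
  is_subgroup S /\ forall f, is_endomorphism f -> forall x, S x -> S (f x).

(* Main.v *)
Require Import Defs.
From mathcomp Require Import all_boot all_algebra.
Import GRing.Theory.
Local Open Scope ring_scope.
Set Implicit Arguments. Unset Strict Implicit.

Section Aux.
Variable G : zmodType.
Variable S : (G * G)%type -> Prop.
Hypothesis HS : characteristic S.

Lemma auto_of (phi psi : (G * G)%type -> (G * G)%type) :
  (forall x y, phi (x + y) = phi x + phi y) ->
  cancel phi psi -> cancel psi phi -> is_automorphism phi.
Proof. move=> Ha c1 c2; split; [exact: Ha | exact: Bijective c1 c2]. Qed.

Lemma S_sub x y : S x -> S y -> S (x - y).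
Proof. by case: HS => [[_ H] _]; apply: H. Qed.

Lemma S_add x y : S x -> S y -> S (x + y).
Proof.
move=> Sx Sy; have S0 : S 0 by case: HS => [[H _] _].
have := S_sub Sx (S_sub S0 Sy); by rewrite sub0r opprK.
Qed.

Lemma S_auto phi : is_automorphism phi -> forall x, S x -> S (phi x).
Proof. by case: HS => _ H; apply: H. Qed.

Lemma pair_sub (a b c d : G) : ((a, b) - (c, d) : G * G) = (a - c, b - d).
Proof. by []. Qed.

Variable e : G -> G.
Hypothesis He : forall u v, e (u + v) = e u + e v.

Lemma swap_auto : is_automorphism (fun x : G * G => (x.2, x.1)).
Proof.
apply: (@auto_of _ (fun x : G * G => (x.2, x.1))).
- by case=> ? ? [].

- by case.
- by case.
Qed.

Lemma D1 x : S x -> S ((e x.1, 0) : G * G).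
Proof.
move=> Sx.
have A : is_automorphism (fun x : G * G => (e x.1 + x.2, x.1)).
  apply: (@auto_of _ (fun y : G * G => (y.2, y.1 - e y.2))).
  - case=> a b [c d] /=; rewrite He; congr pair; rewrite /= -!addrA; congr (_ + _).
    by rewrite addrCA.
  - by case=> a b /=; rewrite addrC addKr.
  - by case=> a b /=; rewrite addrC subrK.
have := S_sub (S_auto A Sx) (S_auto swap_auto Sx).
case: x Sx => a b _ /=; by rewrite pair_sub addrK subrr.
Qed.
Lemma D2 x : S x -> S ((0, e x.2) : G * G).
Proof.
move=> Sx.
have A : is_automorphism (fun x : G * G => (x.2, x.1 + e x.2)).
  apply: (@auto_of _ (fun y : G * G => (y.2 - e y.1, y.1))).
  - case=> a b [c d] /=; rewrite He; congr pair; rewrite /= -!addrA; congr (_ + _).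
    by rewrite addrCA.
  - by case=> a b /=; rewrite addrK.
  - by case=> a b /=; rewrite subrK.
have := S_sub (S_auto A Sx) (S_auto swap_auto Sx).
case: x Sx => a b _ /=; by rewrite pair_sub subrr addrC addKr.
Qed.

Lemma U x : S x -> S ((e x.2, 0) : G * G).
Proof.
move=> Sx.
have A : is_automorphism (fun x : G * G => (x.1 + e x.2, x.2)).
  apply: (@auto_of _ (fun y : G * G => (y.1 - e y.2, y.2))).
  - case=> a b [c d] /=; rewrite He; congr pair; rewrite /= -!addrA; congr (_ + _).
    by rewrite addrCA.
  - by case=> a b /=; rewrite addrK.
  - by case=> a b /=; rewrite subrK.
have := S_sub (S_auto A Sx) Sx.
case: x Sx => a b _ /=; by rewrite pair_sub subrr addrC addKr.
Qed.

Lemma L x : S x -> S ((0, e x.1) : G * G).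
Proof.
move=> Sx.
have A : is_automorphism (fun x : G * G => (x.1, x.2 + e x.1)).
  apply: (@auto_of _ (fun y : G * G => (y.1, y.2 - e y.1))).
  - case=> a b [c d] /=; rewrite He; congr pair; rewrite /= -!addrA; congr (_ + _).
    by rewrite addrCA.
  - by case=> a b /=; rewrite addrK.
  - by case=> a b /=; rewrite subrK.
have := S_sub (S_auto A Sx) Sx.
case: x Sx => a b _ /=; by rewrite pair_sub subrr addrC addKr.
Qed.
End Aux.

Lemma pair_add (G : zmodType) (a b c d : G) : ((a, b) + (c, d) : G * G) = (a + c, b + d).
Proof. by []. Qed.

Theorem lemma2p1 (G : zmodType) (S : (G * G)%type -> Prop) :
  characteristic S -> fully_invariant S.
Proof.
move=> HS; split; first by case: HS.
move=> f Hf [x1 x2] Sx.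
have a1 : forall u v : G, (f (u + v, 0)).1 = (f (u, 0)).1 + (f (v, 0)).1.
  by move=> u v; rewrite -{1}(addr0 (0:G)) -pair_add Hf.
have a2 : forall u v : G, (f (u + v, 0)).2 = (f (u, 0)).2 + (f (v, 0)).2.
  by move=> u v; rewrite -{1}(addr0 (0:G)) -pair_add Hf.
have b1 : forall u v : G, (f (0, u + v)).1 = (f (0, u)).1 + (f (0, v)).1.
  by move=> u v; rewrite -{1}(addr0 (0:G)) -pair_add Hf.
have b2 : forall u v : G, (f (0, u + v)).2 = (f (0, u)).2 + (f (0, v)).2.
  by move=> u v; rewrite -{1}(addr0 (0:G)) -pair_add Hf.
have -> : (x1, x2) = ((x1, 0) + (0, x2) : G * G) by rewrite pair_add addr0 add0r.
rewrite Hf.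
case E1: (f (x1, 0)) => [p q]; case E2: (f (0, x2)) => [r t].
have -> : ((p, q) : G * G) = (p, 0) + (0, q) by rewrite pair_add addr0 add0r.
have -> : ((r, t) : G * G) = (r, 0) + (0, t) by rewrite pair_add addr0 add0r.
apply: S_add => //; apply: S_add => //.
- have := D1 HS a1 Sx; by rewrite /= E1.
- have := L HS a2 Sx; by rewrite /= E1.
- have := U HS b1 Sx; by rewrite /= E2.
- have := D2 HS b2 Sx; by rewrite /= E2.
Qed.
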